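(* Let $p\in(0,1]$. Let $Q=(q_{j,k})_{j,k\geq 0}$ be the generator on $\mathbb N_0$ with $q_{j,j+1}=jp$, $q_{j,k}=\binom{j}{k}p^k(1-p)^{j-k}$ for $0\leq k\leq j-1$, $q_{j,j}=-(jp+1-p^j)$, and $q_{j,k}=0$ otherwise. Let $\bar Q=(\bar q_{j,k})_{j,k\geq1}$ be the generator on $\mathbb N=\{1,2,\dots\}$ with $\bar q_{j,k}=\binom{j-1}{k-1}p^k(1-p)^{j-k}$ for $1\leq k\leq j-1$, $\bar q_{j,j+1}=(j+1)p$, $\bar q_{j,j}=p^j-(2+j)p$, and $\bar q_{j,k}=0$ otherwise. If $\bar Q$ defines a positive recurrent Markov chain, then there exists a quasi-stationary distribution $a$ for $Q$ with eigenvalue $-(1-2p)$, i.e. $a=(a_k)_{k\geq1}$ with $a_k\geq0$, $\sum_k a_k=1$ and $\sum_{j\geq1}a_jq_{j,k}=-(1-2p)a_k$ for all $k\geq1$.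
   Context: $\bar Q$ is the $(1-2p)$-dual of $Q$ with respect to the vector $x_k=k$, i.e. $\bar q_{j,k}=(q_{j,k}+(1-2p)\delta_{jk})k/j$ for $j,k\geq1$. *)

(* Defs.v *)
From Stdlib Require Import Reals Arith.
From Coquelicot Require Import Coquelicot.
Open Scope R_scope.

(** A generator (Q-matrix) on a state space of naturals, as a function
    nat -> nat -> R.  The state space is {k | m <= k} for a lower bound m. *)

Definition Qgen (p : R) (j k : nat) : R :=
  if Nat.eqb k (S j) then INR j * p
  else if Nat.ltb k j then Binomial.C j k * p ^ k * (1 - p) ^ (j - k)
  else if Nat.eqb k j then - (INR j * p + 1 - p ^ j)
  else 0.

(** The generator Qbar on N = {1,2,...} of the paper
    (values outside j,k >= 1 are irrelevant and set to 0). *)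
Definition Qbar (p : R) (j k : nat) : R :=
  if (Nat.eqb j 0 || Nat.eqb k 0)%bool then 0
  else if Nat.ltb k j then Binomial.C (j - 1) (k - 1) * p ^ k * (1 - p) ^ (j - k)
  else if Nat.eqb k (S j) then INR (S j) * p
  else if Nat.eqb k j then p ^ j - (2 + INR j) * p
  else 0.

Definition jrate (G : nat -> nat -> R) (j : nat) : R := - G j j.

Definition jprob (G : nat -> nat -> R) (j k : nat) : R :=
  if Req_EM_T (jrate G j) 0 then (if Nat.eqb j k then 1 else 0)
  else if Nat.eqb j k then 0 else G j k / jrate G j.

(** [hitp m G i n j] = P_j(X_1,...,X_n <> i, X_(n+1) = i) for the jump chain
    (X_l) of G on the state space {k | m <= k}. *)
Fixpoint hitp (m : nat) (G : nat -> nat -> R) (i : nat) (n : nat) (j : nat) : R :=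
  match n with
  | O => jprob G j i
  | S n' => Series (fun k => if (Nat.leb m k && negb (Nat.eqb k i))%bool
                             then jprob G j k * hitp m G i n' k else 0)
  end.

(** [hitt m G i n j] = E_j[(sum_{l <= n} 1/q(X_l)) ; X_1..X_n <> i, X_(n+1) = i],
    i.e. the expected time of the continuous-time chain (sum of exponential
    holding times with means 1/q) on the event that the first return/hit of i
    by the jump chain happens at jump n+1. *)
Fixpoint hitt (m : nat) (G : nat -> nat -> R) (i : nat) (n : nat) (j : nat) : R :=
  match n with
  | O => jprob G j i / jrate G j
  | S n' => Series (fun k => if (Nat.leb m k && negb (Nat.eqb k i))%bool
                             then jprob G j k * (hitp m G i n' k / jrate G j + hitt m G i n' k)
                             else 0)
  end.

(** State i is positive recurrent: starting from i, the chain returns to i with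
    probability 1, and the expected return time
    m_i = E_i[T_i], T_i = inf{t >= J_1 : X_t = i}, is finite. *)
Definition pos_recurrent_state (m : nat) (G : nat -> nat -> R) (i : nat) : Prop :=
  is_series (fun n => hitp m G i n i) 1 /\ ex_series (fun n => hitt m G i n i).

Definition pos_recurrent (m : nat) (G : nat -> nat -> R) : Prop :=
  forall i, (m <= i)%nat -> pos_recurrent_state m G i.

Definition is_qsd (Q : nat -> nat -> R) (a : nat -> R) (lam : R) : Prop :=
  (forall k, (1 <= k)%nat -> 0 <= a k) /\
  is_series (fun n => a (S n)) 1 /\
  (forall k, (1 <= k)%nat -> is_series (fun n => a (S n) * Q (S n) k) (lam * a k)).

(* Main.v *)
Require Import Defs.
From Stdlib Require Import Reals Lra Lia.
From Coquelicot Require Import Coquelicot.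
Open Scope R_scope.

Fixpoint sm (f : nat -> R) (n : nat) : R :=
  match n with O => 0 | S n => sm f n + f n end.

Lemma sm_sum_n f N : sum_n f N = sm f (S N).
Proof.
  induction N; simpl.
  - rewrite sum_O. simpl; lra.
  - rewrite sum_Sn, IHN. simpl. unfold plus; simpl. lra.
Qed.

Lemma sm_ext f g N : (forall k, (k < N)%nat -> f k = g k) -> sm f N = sm g N.
Proof.
  induction N; simpl; intros H; auto.
  rewrite IHN by (intros; apply H; lia). rewrite H by lia. auto.
Qed.

Lemma sm_plus f g N : sm (fun k => f k + g k) N = sm f N + sm g N.
Proof. induction N; simpl; lra. Qed.

Lemma sm_minus f g N : sm (fun k => f k - g k) N = sm f N - sm g N.
Proof. induction N; simpl; lra. Qed.

Lemma sm_scal_l a f N : sm (fun k => a * f k) N = a * sm f N.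
Proof. induction N; simpl; [lra|]. rewrite IHN; ring. Qed.

Lemma sm_scal_r a f N : sm (fun k => f k * a) N = sm f N * a.
Proof. induction N; simpl; [lra|]. rewrite IHN; ring. Qed.

Lemma sm_zero N : sm (fun _ => 0) N = 0.
Proof. induction N; simpl; lra. Qed.

Lemma sm_ext_zero f N B : (forall k, (N <= k)%nat -> f k = 0) -> (N <= B)%nat -> sm f B = sm f N.
Proof.
  intros H HB. induction HB; auto. simpl. rewrite IHHB, H by lia. lra.
Qed.

Lemma sm_le f g N : (forall k, (k < N)%nat -> f k <= g k) -> sm f N <= sm g N.
Proof.
  induction N; simpl; intros H; try lra.
  pose proof (H N ltac:(lia)). pose proof (IHN ltac:(intros; apply H; lia)). lra.
Qed.

Lemma sm_nonneg f N : (forall k, (k < N)%nat -> 0 <= f k) -> 0 <= sm f N.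
Proof. intros H. rewrite <- (sm_zero N). apply sm_le. auto. Qed.

Lemma sm_mono f N M : (forall k, 0 <= f k) -> (N <= M)%nat -> sm f N <= sm f M.
Proof. intros H HM. induction HM; try lra. simpl. specialize (H m). lra. Qed.

Lemma sm_shift f N : sm f (S N) = f O + sm (fun k => f (S k)) N.
Proof. induction N; simpl in *; lra. Qed.

Lemma sm_split f N M : sm f (N + M) = sm f N + sm (fun k => f (N + k)%nat) M.
Proof. induction M; simpl. rewrite Nat.add_0_r; lra. rewrite Nat.add_succ_r. simpl. rewrite IHM. lra. Qed.

Lemma sm_exchange (f : nat -> nat -> R) N M :
  sm (fun i => sm (fun j => f i j) M) N = sm (fun j => sm (fun i => f i j) N) M.
Proof.
  induction N; simpl.
  - rewrite sm_zero; auto.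
  - rewrite IHN, <- sm_plus. auto.
Qed.

Lemma sm_delta f k B : (k < B)%nat -> sm (fun j => (if Nat.eqb j k then 1 else 0) * f j) B = f k.
Proof.
  intros H. induction B; [lia|]. simpl.
  destruct (Nat.eq_dec k B).
  - subst. rewrite Nat.eqb_refl. rewrite (sm_ext _ (fun _ => 0)). rewrite sm_zero; lra.
    intros j Hj. destruct (Nat.eqb_spec j B); [lia|lra].
  - rewrite IHB by lia. destruct (Nat.eqb_spec B k); [lia|lra].
Qed.

Lemma sm_single_le f k B : (forall j, 0 <= f j) -> (k < B)%nat -> f k <= sm f B.
Proof.
  intros H Hk. induction B; [lia|]. simpl. destruct (Nat.eq_dec k B).
  - subst. pose proof (sm_nonneg f B ltac:(auto)). lra.
  - specialize (H B). pose proof (IHB ltac:(lia)). lra.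
Qed.

Lemma is_series_sm f s : is_series f s <-> is_lim_seq (fun N => sm f N) s.
Proof.
  split; intros H.
  - apply is_lim_seq_incr_1. eapply is_lim_seq_ext; [|exact H]. intros; apply sm_sum_n.
  - apply is_lim_seq_incr_1 in H. eapply is_lim_seq_ext in H; [exact H|]. intros; simpl. symmetry; apply sm_sum_n.
Qed.

Lemma lim_le_const u (l M : R) : (forall n, u n <= M) -> is_lim_seq u l -> l <= M.
Proof.
  intros H Hl. pose proof (is_lim_seq_le u (fun _ => M) l M H Hl (is_lim_seq_const M)). simpl in H0. exact H0.
Qed.

Lemma lim_ge_const u (l M : R) : (forall n, M <= u n) -> is_lim_seq u l -> M <= l.
Proof.
  intros H Hl. pose proof (is_lim_seq_le (fun _ => M) u M l H (is_lim_seq_const M) Hl). simpl in H0. auto.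
Qed.

Lemma lim_le u v (l1 l2 : R) : (forall n, u n <= v n) -> is_lim_seq u l1 -> is_lim_seq v l2 -> l1 <= l2.
Proof. intros H H1 H2. pose proof (is_lim_seq_le u v l1 l2 H H1 H2). simpl in H0; auto. Qed.

Lemma incr_le_lim u (l : R) n : (forall m, u m <= u (S m)) -> is_lim_seq u l -> u n <= l.
Proof.
  intros H Hl. apply (lim_ge_const (fun m => u (n + m)%nat)).
  - intros m. induction m. rewrite Nat.add_0_r; lra. rewrite Nat.add_succ_r. specialize (H (n+m)%nat). lra.
  - eapply is_lim_seq_ext; [|apply (proj1 (is_lim_seq_incr_n u n l) Hl)]. intros; simpl; f_equal; lia.
Qed.

Lemma mono_conv u M : (forall n, u n <= u (S n)) -> (forall n, u n <= M) -> exists l : R, is_lim_seq u l.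
Proof.
  intros H HM. destruct (growing_cv u H) as [l Hl].
  - exists M. intros x [n ->]. auto.
  - exists l. apply is_lim_seq_Reals. auto.
Qed.

Lemma nonneg_series_bound f M : (forall n, 0 <= f n) -> (forall N, sm f N <= M) ->
  exists s : R, is_series f s /\ s <= M.
Proof.
  intros H HM. destruct (mono_conv (fun N => sm f N) M) as [s Hs]; auto.
  intros n; simpl; specialize (H n); lra.
  exists s. split. apply is_series_sm; auto. eapply lim_le_const; eauto.
Qed.

Lemma partial_le_series f s N : (forall n, 0 <= f n) -> is_series f s -> sm f N <= s.
Proof.
  intros H Hs. apply is_series_sm in Hs. apply (incr_le_lim (fun N => sm f N)); auto.
  intros m; simpl; specialize (H m); lra.
Qed.

Lemma lim_sm (u : nat -> nat -> R) (l : nat -> R) J :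
  (forall j, is_lim_seq (fun L => u L j) (l j)) -> is_lim_seq (fun L => sm (u L) J) (sm l J).
Proof.
  intros H. induction J; simpl.
  - apply is_lim_seq_const.
  - apply is_lim_seq_plus'; auto.
Qed.

Lemma mct (f : nat -> nat -> R) (F : nat -> R) (s : nat -> R) (S0 : R) :
  (forall L j, 0 <= f L j) -> (forall L j, f L j <= f (S L) j) ->
  (forall j, is_lim_seq (fun L => f L j) (F j)) ->
  (forall L, is_series (f L) (s L)) -> is_lim_seq s S0 -> is_series F S0.
Proof.
  intros Hpos Hinc HF Hs HS.
  assert (HFge : forall L j, f L j <= F j).
  { intros L j. apply (incr_le_lim (fun L => f L j)); auto. }
  assert (HF0 : forall j, 0 <= F j). { intros j. specialize (HFge O j). specialize (Hpos O j). lra. }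
  assert (Hb : forall J, sm F J <= S0).
  { intros J. apply (lim_le (fun L => sm (f L) J) s); auto. intros L. apply partial_le_series; auto.
    apply lim_sm; auto. }
  destruct (nonneg_series_bound F S0 HF0 Hb) as [t [Ht Hle]].
  assert (S0 <= t).
  { apply (lim_le_const s); auto. intros L.
    apply (lim_le (fun N => sm (f L) N) (fun N => sm F N)).
    - intros N. apply sm_le. intros; auto.
    - apply is_series_sm; auto.
    - apply is_series_sm; auto. }
  replace S0 with t by lra. auto.
Qed.

Lemma is_series_fin f N : (forall k, (N <= k)%nat -> f k = 0) -> is_series f (sm f N).
Proof.
  intros H. apply is_series_sm. apply (is_lim_seq_incr_n _ N).
  eapply is_lim_seq_ext; [|apply is_lim_seq_const]. intros n. simpl.
  rewrite (sm_ext_zero f N (n + N)); auto; lia.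
Qed.

Lemma Series_fin f N : (forall k, (N <= k)%nat -> f k = 0) -> Series f = sm f N.
Proof. intros H. apply is_series_unique. apply is_series_fin; auto. Qed.


Lemma Qbar_0k p k : Qbar p 0 k = 0.
Proof. reflexivity. Qed.
Lemma Qbar_j0 p j : Qbar p j 0 = 0.
Proof. unfold Qbar. rewrite Bool.orb_true_r. auto. Qed.

Ltac qbar_tac := unfold Qbar;
  repeat (match goal with
          | |- context [Nat.eqb ?a ?b] => destruct (Nat.eqb_spec a b)
          | |- context [Nat.ltb ?a ?b] => destruct (Nat.ltb_spec a b)
          end; simpl); try lia; auto.

Lemma Qbar_lt p j k : (1 <= k)%nat -> (k < j)%nat ->
  Qbar p j k = Binomial.C (j - 1) (k - 1) * p ^ k * (1 - p) ^ (j - k).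
Proof. intros. qbar_tac. Qed.
Lemma Qbar_up p j : (1 <= j)%nat -> Qbar p j (S j) = INR (S j) * p.
Proof. intros. qbar_tac. Qed.
Lemma Qbar_diag p j : (1 <= j)%nat -> Qbar p j j = p ^ j - (2 + INR j) * p.
Proof. intros. qbar_tac. Qed.
Lemma Qbar_far p j k : (j + 2 <= k)%nat -> Qbar p j k = 0.
Proof. intros. qbar_tac. Qed.

Definition P p j k := jprob (Qbar p) j k.
Definition q p j := jrate (Qbar p) j.
Definition cnd k := (Nat.leb 1 k && negb (Nat.eqb k 1))%bool.
Definition T p j k := if cnd k then P p j k else 0.

Lemma q_val p j : (1 <= j)%nat -> q p j = (2 + INR j) * p - p ^ j.
Proof. intros. unfold q, jrate. rewrite Qbar_diag; auto. ring. Qed.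

Lemma pow_le_p p j : 0 < p <= 1 -> (1 <= j)%nat -> p ^ j <= p.
Proof.
  intros Hp Hj. destruct j; [lia|]. simpl. 
  assert (0 <= p ^ j <= 1). { split. apply pow_le; lra. rewrite <- (pow1 j). apply pow_incr; lra. }
  nra.
Qed.

Lemma q_ge p j : 0 < p <= 1 -> (1 <= j)%nat -> 2 * p <= q p j.
Proof.
  intros Hp Hj. rewrite q_val; auto. pose proof (pow_le_p p j Hp Hj).
  assert (1 <= INR j) by (apply (le_INR 1); auto). nra.
Qed.

Lemma q0 p : q p 0 = 0.
Proof. unfold q, jrate. rewrite Qbar_0k. ring. Qed.

Lemma P0 p k : P p 0 k = if Nat.eqb 0 k then 1 else 0.
Proof. unfold P, jprob. rewrite (q0 p : jrate (Qbar p) 0 = 0). destruct (Req_EM_T 0 0); [auto|lra]. Qed.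

Lemma P_j p j k : 0 < p <= 1 -> (1 <= j)%nat -> P p j k = if Nat.eqb j k then 0 else Qbar p j k / q p j.
Proof.
  intros Hp Hj. unfold P, jprob. fold (q p j). pose proof (q_ge p j Hp Hj).
  destruct (Req_EM_T (q p j) 0); [lra|auto].
Qed.

Lemma C_nonneg n k : 0 <= Binomial.C n k.
Proof.
  unfold Binomial.C. apply Rmult_le_pos. apply pos_INR.
  left. apply Rinv_0_lt_compat. apply Rmult_lt_0_compat; apply INR_fact_lt_0.
Qed.

Lemma Qbar_nonneg p j k : 0 < p <= 1 -> j <> k -> 0 <= Qbar p j k.
Proof.
  intros Hp Hjk. unfold Qbar.
  destruct (Nat.eqb j 0 || Nat.eqb k 0)%bool; [lra|].
  destruct (Nat.ltb_spec k j).
  - apply Rmult_le_pos. apply Rmult_le_pos. apply C_nonneg. apply pow_le; lra. apply pow_le; lra.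
  - destruct (Nat.eqb_spec k (S j)). apply Rmult_le_pos. apply pos_INR. lra.
    destruct (Nat.eqb_spec k j); [lia|lra].
Qed.

Lemma P_nonneg p j k : 0 < p <= 1 -> 0 <= P p j k.
Proof.
  intros Hp. destruct j.
  - rewrite P0. destruct (Nat.eqb 0 k); lra.
  - rewrite P_j by (auto; lia). destruct (Nat.eqb_spec (S j) k); [lra|].
    apply Rmult_le_pos. apply Qbar_nonneg; auto. left. apply Rinv_0_lt_compat.
    pose proof (q_ge p (S j) Hp ltac:(lia)). lra.
Qed.

Lemma P_far p j k : 0 < p <= 1 -> (j + 2 <= k)%nat -> P p j k = 0.
Proof.
  intros Hp H. destruct j.
  - rewrite P0. destruct (Nat.eqb_spec 0 k); [lia|auto].
  - rewrite P_j by (auto; lia). destruct (Nat.eqb_spec (S j) k); [lia|].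
    rewrite Qbar_far by lia. unfold Rdiv; ring.
Qed.

Lemma P_diag p k : 0 < p <= 1 -> (1 <= k)%nat -> P p k k = 0.
Proof. intros. rewrite P_j by auto. rewrite Nat.eqb_refl. auto. Qed.

Lemma P_j0 p j : 0 < p <= 1 -> (1 <= j)%nat -> P p j 0 = 0.
Proof. intros. rewrite P_j by auto. destruct (Nat.eqb j 0); auto. rewrite Qbar_j0. unfold Rdiv; ring. Qed.

Lemma C_nn n : Binomial.C n n = 1.
Proof. unfold Binomial.C. rewrite Nat.sub_diag. simpl. field. apply INR_fact_neq_0. Qed.

Lemma sum_f_sm F n : sum_f_R0 F n = sm F (S n).
Proof. rewrite <- sum_n_Reals. apply sm_sum_n. Qed.

Lemma offdiag_sum p j : 0 < p <= 1 -> (1 <= j)%nat ->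
  sm (fun k => if Nat.eqb j k then 0 else Qbar p j k) (j + 2) = q p j.
Proof.
  intros Hp Hj. destruct j as [|j']; [lia|].
  replace (S j' + 2)%nat with (1 + S (S j'))%nat by lia.
  rewrite sm_split. simpl sm at 1. rewrite Qbar_j0.
  simpl (sm _ (S (S j'))).
  rewrite Nat.eqb_refl. replace (1 + S j')%nat with (S (S j')) by lia.
  destruct (Nat.eqb_spec (S j') (S (S j'))); [lia|].
  rewrite Qbar_up by lia.
  rewrite (sm_ext _ (fun i => p * (Binomial.C j' i * p ^ i * (1 - p) ^ (j' - i)))).
  2:{ intros i Hi. replace (1 + i)%nat with (S i) by lia.
      destruct (Nat.eqb_spec (S j') (S i)); [lia|]. rewrite Qbar_lt by lia.
      replace (S j' - 1)%nat with j' by lia. replace (S i - 1)%nat with i by lia.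
      replace (S j' - S i)%nat with (j' - i)%nat by lia. simpl. destruct (Nat.eqb_spec j' i); [lia|]. ring. }
  rewrite sm_scal_l.
  pose proof (binomial p (1 - p) j') as Hb. rewrite sum_f_sm in Hb. simpl in Hb.
  replace (p + (1 - p)) with 1 in Hb by ring. rewrite pow1 in Hb.
  rewrite C_nn, Nat.sub_diag in Hb. simpl in Hb.
  rewrite q_val by lia. rewrite !S_INR. simpl. destruct (Nat.eqb_spec j' (S j')); [lia|]. nra.
Qed.

Lemma rowsum p j : 0 < p <= 1 -> (1 <= j)%nat -> sm (P p j) (j + 2) = 1.
Proof.
  intros Hp Hj. rewrite (sm_ext _ (fun k => (if Nat.eqb j k then 0 else Qbar p j k) * / q p j)).
  2:{ intros k _. rewrite P_j by auto. destruct (Nat.eqb j k); unfold Rdiv; ring. }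
  rewrite sm_scal_r, offdiag_sum by auto. pose proof (q_ge p j Hp Hj). field. lra.
Qed.

Lemma T_nonneg p j k : 0 < p <= 1 -> 0 <= T p j k.
Proof. intros. unfold T. destruct (cnd k); [apply P_nonneg; auto|lra]. Qed.

Lemma T_far p j k : 0 < p <= 1 -> (j + 2 <= k)%nat -> T p j k = 0.
Proof. intros. unfold T. destruct (cnd k); [apply P_far; auto|lra]. Qed.

Lemma T_sum p j B : 0 < p <= 1 -> (1 <= j)%nat -> (j + 2 <= B)%nat -> sm (T p j) B = 1 - P p j 1.
Proof.
  intros Hp Hj HB. rewrite (sm_ext_zero _ (j+2)) by (auto; intros; apply T_far; auto).
  rewrite <- (rowsum p j) by auto.
  replace (j + 2)%nat with (2 + j)%nat by lia. rewrite !sm_split.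
  rewrite (sm_ext (fun k => T p j (2 + k)) (fun k => P p j (2 + k))).
  2:{ intros k _. unfold T, cnd. simpl. auto. }
  simpl. unfold T, cnd. simpl. rewrite P_j0 by auto. lra.
Qed.

Lemma T_sum_le p j B : 0 < p <= 1 -> (j + 2 <= B)%nat -> sm (T p j) B <= 1 - P p j 1.
Proof.
  intros Hp HB. destruct j.
  - rewrite P0. simpl. rewrite (sm_ext _ (fun _ => 0)). rewrite sm_zero; lra.
    intros k _. unfold T. rewrite P0. destruct (cnd k) eqn:E; auto. unfold cnd in E.
    destruct (Nat.eqb_spec 0 k); auto. subst. discriminate.
  - rewrite T_sum by (auto; lia). lra.
Qed.


Fixpoint h p m k : R := match m with
  | O => if Nat.eqb k 1 then 1 else 0
  | S m' => sm (fun j => h p m' j * T p j k) (S (S m')) end.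
Definition Rr p m := sm (fun j => h p m j * P p j 1) (S (S m)).
Definition b p n j := hitp 1 (Qbar p) 1 n j.
Definition c p n j := hitt 1 (Qbar p) 1 n j.

Section S1.
Variable p : R.
Hypothesis Hp : 0 < p <= 1.

Lemma h_nonneg m k : 0 <= h p m k.
Proof.
  revert k; induction m; intros k; cbn [h].
  - destruct (Nat.eqb k 1); lra.
  - apply sm_nonneg. intros. apply Rmult_le_pos; auto. apply T_nonneg; auto.
Qed.

Lemma h_supp m k : (m + 2 <= k)%nat -> h p m k = 0.
Proof.
  destruct m; intros H; cbn [h].
  - destruct (Nat.eqb_spec k 1); [lia|auto].
  - rewrite (sm_ext _ (fun _ => 0)). apply sm_zero. intros j Hj. rewrite T_far by (auto; lia). ring.
Qed.

Lemma h_0 m : h p m 0 = 0.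
Proof.
  destruct m; cbn [h]; auto. rewrite (sm_ext _ (fun _ => 0)). apply sm_zero. intros. unfold T. simpl. ring.
Qed.

Lemma h_S1 m : h p (S m) 1 = 0.
Proof.
  cbn [h]. rewrite (sm_ext _ (fun _ => 0)). apply sm_zero. intros. unfold T. simpl. ring.
Qed.

Lemma b0 j : b p 0 j = P p j 1.
Proof. reflexivity. Qed.
Lemma c0 j : c p 0 j = P p j 1 / q p j.
Proof. reflexivity. Qed.

Lemma bS n j B : (j + 2 <= B)%nat -> b p (S n) j = sm (fun k => T p j k * b p n k) B.
Proof.
  intros HB. unfold b. cbn [hitp]. rewrite (Series_fin _ B).
  - apply sm_ext. intros k _. unfold T, cnd, P. destruct (_ && _)%bool; ring.
  - intros k Hk. fold (P p j k). rewrite P_far by (auto; lia). destruct (_ && _)%bool; ring.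
Qed.

Lemma cS n j B : (j + 2 <= B)%nat -> c p (S n) j = sm (fun k => T p j k * (b p n k / q p j + c p n k)) B.
Proof.
  intros HB. unfold c. cbn [hitt]. rewrite (Series_fin _ B).
  - apply sm_ext. intros k _. unfold T, cnd, P, b, q. destruct (_ && _)%bool; ring.
  - intros k Hk. fold (P p j k). rewrite P_far by (auto; lia). destruct (_ && _)%bool; ring.
Qed.

Lemma hG x m B : (m + 3 <= B)%nat ->
  sm (fun j => h p m j * sm (fun k => T p j k * x k) B) B = sm (fun k => h p (S m) k * x k) B.
Proof.
  intros HB.
  rewrite (sm_ext _ (fun j => sm (fun k => h p m j * T p j k * x k) B)).
  2:{ intros j _. rewrite <- sm_scal_l. apply sm_ext. intros; ring. }
  rewrite sm_exchange. apply sm_ext. intros k _.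
  rewrite sm_scal_r. f_equal. cbn [h]. apply sm_ext_zero; [|lia].
  intros j Hj. rewrite h_supp by lia. ring.
Qed.

Lemma hA n m B : (m + 3 <= B)%nat ->
  sm (fun j => h p m j * b p (S n) j) B = sm (fun k => h p (S m) k * b p n k) B.
Proof.
  intros HB. rewrite <- hG by auto. apply sm_ext. intros j Hj.
  destruct (Compare_dec.le_lt_dec (j + 2) B).
  - rewrite (bS n j B); auto.
  - rewrite h_supp by lia. ring.
Qed.

Lemma hAB n : forall m B, (m + n + 2 <= B)%nat ->
  sm (fun j => h p m j * b p n j) B = Rr p (m + n).
Proof.
  induction n; intros m B HB.
  - rewrite Nat.add_0_r. unfold Rr. apply sm_ext_zero; [|lia].
    intros j Hj. rewrite h_supp by lia. ring.
  - rewrite hA by lia. rewrite IHn by lia. f_equal. lia.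
Qed.

Lemma b_ret n : b p n 1 = Rr p n.
Proof.
  replace (Rr p n) with (Rr p (0 + n)) by auto. rewrite <- (hAB n 0 (n + 2)) by lia. cbn [h].
  rewrite (sm_delta (fun j => b p n j) 1 (n + 2)) by lia. auto.
Qed.

Lemma cons_mass m : sm (h p m) (m + 2) + sm (Rr p) m = 1.
Proof.
  induction m.
  - simpl. lra.
  - assert (E : sm (h p (S m)) (S m + 2) = sm (h p m) (m + 2) - Rr p m).
    { transitivity (sm (fun j => h p m j * sm (T p j) (S m + 2)) (S m + 2)).
      - rewrite (sm_ext (fun j => h p m j * _) (fun j => h p m j * sm (fun k => T p j k * 1) (S m + 2))).
        + rewrite hG by lia. apply sm_ext; intros; ring.
        + intros; f_equal; apply sm_ext; intros; ring.
      - rewrite (sm_ext _ (fun j => h p m j - h p m j * P p j 1)).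
        + rewrite sm_minus. unfold Rr.
          rewrite (sm_ext_zero (h p m) (m + 2)); [| intros; apply h_supp; lia | lia].
          rewrite (sm_ext_zero (fun j => h p m j * P p j 1) (S (S m))).
          replace (S (S m)) with (m + 2)%nat by lia. auto.
          intros; rewrite h_supp by lia; ring. lia.
        + intros j Hj. destruct j.
          * rewrite h_0. ring.
          * destruct (Compare_dec.le_lt_dec (S j + 2) (S m + 2)).
            -- rewrite T_sum by (auto; lia). ring.
            -- rewrite h_supp by lia. ring. }
    rewrite E. simpl. lra.
Qed.

Lemma b_nonneg n j : 0 <= b p n j.
Proof.
  revert j; induction n; intros j.
  - rewrite b0. apply P_nonneg; auto.
  - rewrite (bS n j (j + 2)) by lia. apply sm_nonneg. intros. apply Rmult_le_pos; auto. apply T_nonneg; auto.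
Qed.

Definition Bs M j := sm (fun r => b p r j) M.
Definition Cs N j := sm (fun n => c p n j) N.

Lemma Bs_le M : forall j, Bs M j <= 1.
Proof.
  induction M; intros j; unfold Bs in *.
  - simpl; lra.
  - rewrite sm_shift. rewrite b0.
    rewrite (sm_ext _ (fun r => sm (fun k => T p j k * b p r k) (j + 2))).
    2:{ intros. apply bS. lia. }
    rewrite sm_exchange.
    rewrite (sm_ext _ (fun k => T p j k * sm (fun r => b p r k) M)).
    2:{ intros. rewrite <- sm_scal_l. auto. }
    pose proof (T_sum_le p j (j + 2) Hp ltac:(lia)).
    assert (sm (fun k => T p j k * sm (fun r => b p r k) M) (j + 2) <= sm (T p j) (j + 2)).
    { apply sm_le. intros k _. pose proof (IHM k). pose proof (T_nonneg p j k Hp). nra. }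
    lra.
Qed.

Lemma Bs_nonneg M j : 0 <= Bs M j.
Proof. apply sm_nonneg. intros; apply b_nonneg. Qed.

Lemma c_nonneg n j : 0 <= c p n j.
Proof.
  revert j; induction n; intros j.
  - rewrite c0. destruct j.
    + rewrite q0. unfold Rdiv. rewrite Rinv_0. lra.
    + pose proof (q_ge p (S j) Hp ltac:(lia)). apply Rmult_le_pos. apply P_nonneg; auto.
      left; apply Rinv_0_lt_compat; lra.
  - rewrite (cS n j (j + 2)) by lia. apply sm_nonneg. intros. apply Rmult_le_pos. apply T_nonneg; auto.
    apply Rplus_le_le_0_compat; auto. destruct j.
    + rewrite q0. unfold Rdiv. rewrite Rinv_0. lra.
    + pose proof (q_ge p (S j) Hp ltac:(lia)). apply Rmult_le_pos. apply b_nonneg.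
      left; apply Rinv_0_lt_compat; lra.
Qed.

Lemma CsS N j B : (j + 2 <= B)%nat ->
  Cs (S N) j = Bs (S N) j / q p j + sm (fun k => T p j k * Cs N k) B.
Proof.
  intros HB. unfold Cs, Bs. rewrite !sm_shift. rewrite c0, b0.
  rewrite (sm_ext (fun n => c p (S n) j) (fun n => sm (fun k => T p j k * (b p n k / q p j + c p n k)) B)).
  2:{ intros; apply cS; auto. }
  rewrite (sm_ext (fun n => b p (S n) j) (fun n => sm (fun k => T p j k * b p n k) B)).
  2:{ intros; apply bS; auto. }
  rewrite !(sm_exchange _ N B).
  rewrite (sm_ext (fun k => sm (fun i => T p j k * (b p i k / q p j + c p i k)) N)
     (fun k => (T p j k * sm (fun i => b p i k) N) / q p j + T p j k * sm (fun i => c p i k) N)).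
  2:{ intros k _. rewrite <- !sm_scal_l. unfold Rdiv. rewrite <- sm_scal_r, <- sm_plus. apply sm_ext. intros; ring. }
  rewrite sm_plus. unfold Rdiv. rewrite sm_scal_r.
  rewrite (sm_ext (fun k => sm (fun i => T p j k * b p i k) N) (fun k => T p j k * sm (fun i => b p i k) N)).
  2:{ intros; rewrite sm_scal_l; auto. }
  ring.
Qed.

Lemma hC N : forall m B, (m + N + 2 <= B)%nat ->
  sm (fun j => h p m j * Cs N j) B = sm (fun l => sm (fun j => h p (m + l) j * Bs (N - l) j / q p j) B) N.
Proof.
  induction N; intros m B HB.
  - simpl. unfold Cs. simpl. rewrite (sm_ext _ (fun _ => 0)). apply sm_zero. intros; ring.
  - rewrite (sm_ext (fun j => h p m j * Cs (S N) j)
      (fun j => h p m j * Bs (S N) j / q p j + h p m j * sm (fun k => T p j k * Cs N k) B)).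
    2:{ intros j Hj. destruct (Compare_dec.le_lt_dec (j + 2) B).
        - rewrite (CsS N j B) by auto. unfold Rdiv; ring.
        - rewrite h_supp by lia. unfold Rdiv; ring. }
    rewrite sm_plus. rewrite hG by lia. rewrite IHN by lia.
    rewrite sm_shift. rewrite Nat.add_0_r, Nat.sub_0_r. f_equal.
    apply sm_ext. intros l _. apply sm_ext. intros j _.
    replace (m + S l)%nat with (S m + l)%nat by lia. simpl (S N - S l)%nat. auto.
Qed.

End S1.


Lemma is_series_lin f1 f2 l1 l2 a b0 : is_series f1 l1 -> is_series f2 l2 ->
  is_series (fun n => f1 n * a + f2 n * b0) (l1 * a + l2 * b0).
Proof.
  intros H1 H2. apply is_series_sm in H1, H2. apply is_series_sm.
  eapply is_lim_seq_ext.
  2:{ apply is_lim_seq_plus'. exact (is_lim_seq_scal_r _ a l1 H1). exact (is_lim_seq_scal_r _ b0 l2 H2). }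
  intros n. simpl. rewrite sm_plus, !sm_scal_r. auto.
Qed.

Lemma lim_bound (s : nat -> R) x a K L : 0 <= K -> is_lim_seq s 1 ->
  (forall N, (L <= N)%nat -> x <= a + K * (1 - s N)) -> x <= a.
Proof.
  intros HK Hs H. apply is_lim_seq_Reals in Hs.
  destruct (Rle_or_lt x a) as [|Hlt]; auto. exfalso.
  destruct (Req_dec K 0) as [->|HK0].
  - specialize (H L (le_n L)). lra.
  - assert (He : (x - a) / K > 0). { apply Rdiv_lt_0_compat; lra. }
    destruct (Hs _ He) as [N0 HN0]. specialize (HN0 (Nat.max N0 L) ltac:(lia)).
    specialize (H (Nat.max N0 L) ltac:(lia)). unfold Rdist in HN0.
    apply Rabs_def2 in HN0. destruct HN0 as [_ HN0].
    assert (K * (1 - s (Nat.max N0 L)) < x - a).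
    { replace (x - a) with (K * ((x - a) / K)) by (field; lra). apply Rmult_lt_compat_l; lra. }
    lra.
Qed.

Section S2.
Variable p : R.
Hypothesis Hp : 0 < p <= 1.
Hypothesis Hret : is_series (Rr p) 1.
Hypothesis Hex : ex_series (fun n => c p n 1).

Definition Cser := Series (fun n => c p n 1).

Lemma invq j : 0 <= / q p j <= / (2 * p).
Proof.
  destruct j.
  - rewrite q0, Rinv_0. split; [lra|]. left; apply Rinv_0_lt_compat; lra.
  - pose proof (q_ge p (S j) Hp ltac:(lia)). split.
    + left; apply Rinv_0_lt_compat; lra.
    + apply Rinv_le_contravar; lra.
Qed.

Definition Y l := sm (fun j => h p l j / q p j) (l + 2).

Lemma Y_nonneg l : 0 <= Y l.
Proof. apply sm_nonneg. intros. pose proof (invq k). pose proof (h_nonneg p Hp l k). unfold Rdiv; nra. Qed.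

Lemma Cs_le N : Cs p N 1 <= Cser.
Proof. apply partial_le_series. intros; apply c_nonneg; auto. apply Series_correct; auto. Qed.

Lemma D1 L : sm Y L <= Cser.
Proof.
  apply (lim_bound (fun N => sm (Rr p) N) _ Cser (INR L * / (2 * p)) L).
  - apply Rmult_le_pos. apply pos_INR. left; apply Rinv_0_lt_compat; lra.
  - apply is_series_sm; auto.
  - intros N HN. pose proof (Cs_le N) as HC.
    pose proof (hC p Hp N 0 (N + 2) ltac:(lia)) as E.
    cbn [h] in E. rewrite (sm_delta (fun j => Cs p N j) 1 (N + 2)) in E by lia.
    simpl (0 + _)%nat in E.
    set (X := fun l => sm (fun j => h p l j * Bs p (N - l) j / q p j) (N + 2)) in E.
    assert (HX0 : forall l, 0 <= X l).
    { intros l. apply sm_nonneg. intros j _. pose proof (invq j). pose proof (h_nonneg p Hp l j).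
      pose proof (Bs_nonneg p Hp (N - l) j). unfold Rdiv. apply Rmult_le_pos; [nra|lra]. }
    assert (HXY : forall l, (l < L)%nat -> Y l - / (2 * p) * (1 - sm (Rr p) N) <= X l).
    { intros l Hl.
      assert (E1 : Y l - X l = sm (fun j => h p l j * (1 - Bs p (N - l) j) * / q p j) (N + 2)).
      { unfold Y, X. rewrite <- (sm_ext_zero (fun j => h p l j / q p j) (l + 2) (N + 2)).
        2:{ intros; rewrite h_supp by (auto; lia). unfold Rdiv; ring. } 2: lia.
        rewrite <- sm_minus. apply sm_ext; intros; unfold Rdiv; ring. }
      assert (E2 : sm (fun j => h p l j * (1 - Bs p (N - l) j)) (N + 2) = 1 - sm (Rr p) N).
      { rewrite (sm_ext _ (fun j => h p l j - sm (fun r => h p l j * b p r j) (N - l))).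
        2:{ intros; unfold Bs; rewrite sm_scal_l; ring. }
        rewrite sm_minus. rewrite sm_exchange.
        rewrite (sm_ext (fun r => sm (fun j => h p l j * b p r j) (N + 2)) (fun r => Rr p (l + r))).
        2:{ intros r Hr. apply hAB; auto; lia. }
        rewrite (sm_ext_zero (h p l) (l + 2) (N + 2)); [| intros; apply h_supp; auto; lia | lia].
        pose proof (cons_mass p Hp l). pose proof (sm_split (Rr p) l (N - l)).
        replace (l + (N - l))%nat with N in H0 by lia. lra. }
      assert (sm (fun j => h p l j * (1 - Bs p (N - l) j) * / q p j) (N + 2) <=
              sm (fun j => h p l j * (1 - Bs p (N - l) j) * / (2 * p)) (N + 2)).
      { apply sm_le. intros j _. pose proof (invq j). pose proof (h_nonneg p Hp l j).
        pose proof (Bs_le p Hp (N - l) j). apply Rmult_le_compat_l; [nra|lra]. }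
      rewrite sm_scal_r, E2 in H. lra. }
    assert (sm Y L - INR L * / (2 * p) * (1 - sm (Rr p) N) <= sm X N).
    { apply Rle_trans with (sm X L).
      - assert (G : forall L', (L' <= L)%nat -> sm Y L' - INR L' * (/ (2 * p) * (1 - sm (Rr p) N)) <= sm X L').
        { induction L'; intros HL'; cbn [sm]; [simpl; lra|].
          rewrite S_INR. pose proof (HXY L' ltac:(lia)). pose proof (IHL' ltac:(lia)). lra. }
        specialize (G L (le_n L)). lra.
      - apply sm_mono; auto. }
    unfold Cs in HC, E. lra.
Qed.

Definition nu j := Series (fun l => h p l j).

Lemma hq_le_Y l j : h p l j / q p j <= Y l.
Proof.
  destruct (Compare_dec.le_lt_dec (l + 2) j).
  - rewrite h_supp by (auto; lia). unfold Rdiv; rewrite Rmult_0_l. apply Y_nonneg.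
  - unfold Y. apply (sm_single_le (fun j => h p l j / q p j)); auto.
    intros i. pose proof (invq i). pose proof (h_nonneg p Hp l i). unfold Rdiv; nra.
Qed.

Lemma nu_series j : is_series (fun l => h p l j) (nu j).
Proof.
  apply Series_correct. destruct j.
  - exists 0. apply (is_series_ext (fun _ => 0)). intros; rewrite h_0; auto.
    exact (is_series_fin (fun _ => 0) 0 (fun _ _ => eq_refl)).
  - pose proof (q_ge p (S j) Hp ltac:(lia)).
    destruct (nonneg_series_bound (fun l => h p l (S j)) (q p (S j) * Cser)) as [s [Hs _]].
    + intros; apply h_nonneg; auto.
    + intros L. assert (sm (fun l => h p l (S j) / q p (S j)) L <= Cser).
      { apply Rle_trans with (sm Y L). apply sm_le. intros; apply hq_le_Y. apply D1. }
      unfold Rdiv in H0. rewrite sm_scal_r in H0.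
      apply Rmult_le_compat_l with (r := q p (S j)) in H0; [|lra].
      replace (q p (S j) * (sm (fun l => h p l (S j)) L * / q p (S j))) with (sm (fun l => h p l (S j)) L) in H0 by (field; lra).
      auto.
    + exists s; auto.
Qed.

Lemma nu_nonneg j : 0 <= nu j.
Proof. apply (partial_le_series (fun l => h p l j) _ 0). intros; apply h_nonneg; auto. apply nu_series. Qed.

Lemma nu_0 : nu 0 = 0.
Proof. unfold nu. rewrite (Series_fin _ 0). auto. intros; apply h_0; auto. Qed.

Lemma nu_1 : nu 1 = 1.
Proof.
  unfold nu. rewrite (Series_fin _ 1). simpl. lra.
  intros k Hk. destruct k; [lia|]. apply h_S1; auto.
Qed.

Definition mu j := nu j / q p j.

Lemma mu_nonneg j : 0 <= mu j.
Proof. unfold mu, Rdiv. pose proof (invq j). pose proof (nu_nonneg j). nra. Qed.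

Lemma sm_mu_series J : is_series (fun l => sm (fun j => h p l j / q p j) J) (sm mu J).
Proof.
  induction J; simpl.
  - exact (is_series_fin (fun _ => 0) 0 (fun _ _ => eq_refl)).
  - pose proof (is_series_lin _ _ _ _ 1 (/ q p J) IHJ (nu_series J)).
    replace (sm mu J + mu J) with (sm mu J * 1 + nu J * / q p J) by (unfold mu, Rdiv; ring).
    eapply is_series_ext; [|exact H]. intros; simpl; unfold Rdiv; ring.
Qed.

Lemma sm_mu_le J : sm mu J <= Cser.
Proof.
  pose proof (sm_mu_series J) as H. apply is_series_sm in H.
  refine (lim_le_const _ _ _ _ H). intros L. simpl.
  apply Rle_trans with (sm Y L); [|apply D1]. apply sm_le. intros l _.
  destruct (Compare_dec.le_lt_dec J (l + 2)).
  - unfold Y. apply sm_mono; auto. intros i. pose proof (invq i). pose proof (h_nonneg p Hp l i). unfold Rdiv; nra.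
  - unfold Y. rewrite (sm_ext_zero _ (l + 2) J). lra. 2: lia.
    intros; rewrite h_supp by (auto; lia). unfold Rdiv; ring.
Qed.
End S2.


Lemma C_rel j k : (1 <= k)%nat -> (k <= j)%nat ->
  Binomial.C j k * INR k = Binomial.C (j - 1) (k - 1) * INR j.
Proof.
  intros Hk Hj. destruct j as [|j0]; [lia|]. destruct k as [|k0]; [lia|].
  replace (S j0 - 1)%nat with j0 by lia. replace (S k0 - 1)%nat with k0 by lia.
  unfold Binomial.C. replace (S j0 - S k0)%nat with (j0 - k0)%nat by lia.
  rewrite !fact_simpl, !mult_INR.
  pose proof (INR_fact_neq_0 j0). pose proof (INR_fact_neq_0 k0). pose proof (INR_fact_neq_0 (j0 - k0)).
  assert (INR (S k0) <> 0) by (apply not_0_INR; lia).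
  field. auto.
Qed.

Lemma Qgen_rel p j k : (1 <= j)%nat -> (1 <= k)%nat ->
  Qgen p j k * INR k = Qbar p j k * INR j - (if Nat.eqb j k then (1 - 2 * p) * INR k else 0).
Proof.
  intros Hj Hk. unfold Qgen.
  destruct (Nat.eqb_spec k (S j)).
  - subst. rewrite Qbar_up by auto. destruct (Nat.eqb_spec j (S j)); [lia|]. ring.
  - destruct (Nat.ltb_spec k j).
    + rewrite Qbar_lt by auto. destruct (Nat.eqb_spec j k); [lia|].
      replace (Binomial.C (j - 1) (k - 1) * p ^ k * (1 - p) ^ (j - k) * INR j) with (Binomial.C (j - 1) (k - 1) * INR j * p ^ k * (1 - p) ^ (j - k)) by ring.
      rewrite <- (C_rel j k) by lia. ring.
    + destruct (Nat.eqb_spec k j).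
      * subst. rewrite Qbar_diag by auto. rewrite Nat.eqb_refl. ring.
      * rewrite Qbar_far by lia. destruct (Nat.eqb_spec j k); [lia|]. ring.
Qed.

Lemma delta_series g k : (1 <= k)%nat ->
  is_series (fun n => (if Nat.eqb (S n) k then 1 else 0) * g (S n)) (g k).
Proof.
  intros Hk.
  apply (is_series_ext (fun n => (if Nat.eqb n (k - 1) then 1 else 0) * g (S n))).
  { intros n. destruct (Nat.eqb_spec n (k - 1)), (Nat.eqb_spec (S n) k); try lia; auto. }
  replace (g k) with (sm (fun n => (if Nat.eqb n (k - 1) then 1 else 0) * g (S n)) k).
  - apply is_series_fin. intros n Hn. destruct (Nat.eqb_spec n (k - 1)); [lia|ring].
  - rewrite (sm_delta (fun n => g (S n)) (k - 1) k) by lia. f_equal. lia.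
Qed.

Section S3.
Variable p : R.
Hypothesis Hp : 0 < p <= 1.
Hypothesis Hret : is_series (Rr p) 1.
Hypothesis Hex : ex_series (fun n => c p n 1).

Lemma invariance k : (1 <= k)%nat -> is_series (fun j => nu p j * P p j k) (nu p k).
Proof.
  intros Hk.
  set (f := fun L j => sm (fun l => h p l j) L * P p j k).
  apply (mct f _ (fun L => sm (f L) (L + 1)) (nu p k)).
  - intros L j. unfold f. apply Rmult_le_pos. apply sm_nonneg; intros; apply h_nonneg; auto. apply P_nonneg; auto.
  - intros L j. unfold f. cbn [sm]. pose proof (h_nonneg p Hp L j). pose proof (P_nonneg p j k Hp). nra.
  - intros j. unfold f. exact (is_lim_seq_scal_r _ _ _ (proj1 (is_series_sm _ _) (nu_series p Hp Hret Hex j))).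
  - intros L. apply is_series_fin. intros j Hj. unfold f.
    rewrite (sm_ext _ (fun _ => 0)). rewrite sm_zero; ring. intros; apply h_supp; auto; lia.
  - apply (is_lim_seq_ext (fun L => sm (fun l => sm (fun j => h p l j * P p j k) (l + 2)) L)).
    { intros L. unfold f. rewrite (sm_ext (fun j => sm _ L * P p j k) (fun j => sm (fun l => h p l j * P p j k) L)).
      2:{ intros; rewrite sm_scal_r; auto. }
      rewrite sm_exchange. apply sm_ext. intros l Hl. symmetry. apply sm_ext_zero; [|lia].
      intros j Hj. rewrite h_supp by (auto; lia). ring. }
    destruct (Nat.eqb_spec k 1).
    + subst. rewrite (nu_1 p). apply is_series_sm in Hret.
      eapply is_lim_seq_ext; [|exact Hret]. intros L. apply sm_ext. intros l _. unfold Rr.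
      f_equal. lia.
    + apply (is_lim_seq_ext (fun L => sm (fun l => h p l k) (S L))).
      { intros L. rewrite sm_shift. cbn [h]. destruct (Nat.eqb_spec k 1); [lia|]. rewrite Rplus_0_l.
        apply sm_ext. intros l _. cbn [h]. replace (l + 2)%nat with (S (S l)) by lia.
        apply sm_ext. intros j _. unfold T, cnd. destruct (Nat.leb_spec 1 k); [|lia].
        destruct (Nat.eqb_spec k 1); [lia|]. simpl. auto. }
      apply (is_lim_seq_incr_1 (fun L => sm (fun l => h p l k) L)).
      apply is_series_sm. apply nu_series; auto.
Qed.
End S3.


Theorem proposition4 (p : R) (hp0 : 0 < p) (hp1 : p <= 1) :
  pos_recurrent 1 (Qbar p) ->
  exists a : nat -> R, is_qsd (Qgen p) a (- (1 - 2 * p)).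
Proof.
  intros Hrec. assert (Hp : 0 < p <= 1) by lra.
  destruct (Hrec 1%nat (le_n 1)) as [Hr Hex].
  assert (Hret : is_series (Rr p) 1).
  { eapply is_series_ext; [|exact Hr]. intros n. apply (b_ret p Hp n). }
  change (ex_series (fun n => c p n 1)) in Hex.
  set (MU := mu p). set (NU := nu p).
  set (g := fun n => MU (S n) / INR (S n)).
  assert (Hg0 : forall n, 0 <= g n).
  { intros n. unfold g, Rdiv. apply Rmult_le_pos. apply mu_nonneg; auto.
    left; apply Rinv_0_lt_compat. apply lt_0_INR; lia. }
  destruct (nonneg_series_bound g (Cser p)) as [Z [HZ _]]; auto.
  { intros N. apply Rle_trans with (sm MU (S N)); [|apply sm_mu_le; auto].
    rewrite sm_shift. apply Rle_trans with (sm (fun n => MU (S n)) N).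
    - apply sm_le. intros n _. unfold g, Rdiv. pose proof (mu_nonneg p Hp Hret Hex (S n)).
      assert (1 <= INR (S n)) by (apply (le_INR 1); lia).
      assert (/ INR (S n) <= 1). { rewrite <- Rinv_1. apply Rinv_le_contravar; lra. }
      fold MU in H. nra.
    - pose proof (mu_nonneg p Hp Hret Hex 0). fold MU in H. lra. }
  assert (q1 : 0 < q p 1). { pose proof (q_ge p 1 Hp (le_n 1)). lra. }
  assert (HZpos : 0 < Z).
  { pose proof (partial_le_series g Z 1 Hg0 HZ). simpl in H. unfold g in H.
    unfold MU, mu in H. rewrite (nu_1 p) in H. simpl in H.
    unfold Rdiv in H. rewrite Rinv_1 in H. assert (0 < / q p 1) by (apply Rinv_0_lt_compat; lra).
    lra. }
  exists (fun k => MU k / INR k / Z).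
  split; [|split].
  - intros k Hk. unfold Rdiv. apply Rmult_le_pos. apply Rmult_le_pos. apply mu_nonneg; auto.
    left; apply Rinv_0_lt_compat. apply lt_0_INR; lia. left; apply Rinv_0_lt_compat; lra.
  - pose proof (is_series_scal_r (/ Z) g Z HZ). rewrite Rinv_r in H by lra. exact H.
  - intros k Hk.
    assert (Hk0 : 0 < INR k) by (apply lt_0_INR; lia).
    set (A := / (INR k * Z)).
    pose proof (invariance p Hp Hret Hex k Hk) as Hinv.
    assert (Hinv' : is_series (fun n => NU (S n) * P p (S n) k) (NU k)).
    { apply (is_series_incr_1 (fun j => NU j * P p j k)).
      match goal with |- is_series _ ?l => replace l with (NU k) end. exact Hinv.
      unfold NU. rewrite (nu_0 p). unfold plus; simpl; ring. }
    pose proof (delta_series NU k Hk) as Hd1.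
    pose proof (delta_series (fun k => MU k / INR k / Z) k Hk) as Hd2.
    pose proof (is_series_lin _ _ _ _ A (- A) Hinv' Hd1) as H1.
    pose proof (is_series_lin _ _ _ _ 1 (- (1 - 2 * p)) H1 Hd2) as H2.
    replace (- (1 - 2 * p) * (MU k / INR k / Z)) with
      ((NU k * A + NU k * - A) * 1 + MU k / INR k / Z * - (1 - 2 * p)) by ring.
    eapply is_series_ext; [|exact H2]. intros n. cbv beta. match goal with |- ?x = ?y => change (@eq R x y) end.
    set (j := S n).
    assert (Hj0 : 0 < INR j) by (apply lt_0_INR; unfold j; lia).
    assert (Hqj : 2 * p <= q p j) by (apply q_ge; auto; unfold j; lia).
    pose proof (Qgen_rel p j k ltac:(unfold j; lia) Hk) as HQ.
    assert (HQ' : Qgen p j k = (Qbar p j k * INR j - (if Nat.eqb j k then (1 - 2 * p) * INR k else 0)) / INR k).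
    { rewrite <- HQ. field. lra. }
    rewrite HQ'. unfold A, MU, mu, NU.
    destruct (Nat.eqb_spec j k).
    + rewrite <- e. rewrite (P_diag p j Hp) by (unfold j; lia).
      assert (Qbar p j j = - q p j) by (unfold q, jrate; ring). rewrite H.
      field. repeat split; lra.
    + rewrite (P_j p j k Hp) by (unfold j; lia). destruct (Nat.eqb_spec j k); [contradiction|].
      field. repeat split; lra.
Qed.
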